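(* Let $d=4$ and $G=\{(1),(12)(34),(13)(24),(14)(23)\}\le S_4$. Then $Aut_0(T_{4;G})\cong S_3\times S_6$. More precisely: $T_{(4;G)}$ and $T_{(3,1);G}$ are singletons; $T_{(2^2);G}$ and $T_{(2,1^2);G}$ each have three elements; $T_{(1^4);G}$ has six elements; every element of $Aut_0(T_{4;G})$ permutes the three elements of $T_{(2^2);G}$ and correspondingly the three elements of $T_{(2,1^2);G}$ (each $(2^2)$-orbit lying above exactly one $(2,1^2)$-orbit), and the $S_3$ factor consists of these simultaneous permutations, while the $S_6$ factor consists of all permutations of the six elements of $T_{(1^4);G}$.
   Context: For $\lambda=(\lambda_1\ge\dots\ge\lambda_k>0)$ a partition of $d$, a tabloid of shape $\lambda$ is a sequence $A=(A_1,\dots,A_k)$ of pairwise disjoint subsets of $\{1,\dots,d\}$ with $|A_i|=\lambda_i$; $T_\lambda$ is their set and $T_d$ the union over all partitions. $S_d$ acts by $\zeta A=(\zeta(A_1),\dots,\zeta(A_k))$. $T_d$ is partially ordered by: $A\le B$ iff $A_1\cup\dots\cup A_i\subseteq B_1\cup\dots\cup B_i$ for all $i\ge1$ (missing rows taken empty). For $G\le S_d$, $T_{\lambda;G}$ is the set of $G$-orbits in $T_\lambda$, $T_{d;G}$ the set of all $G$-orbits in $T_d$, partially ordered by $a\le b$ iff there are $A\in a$, $B\in b$ with $A\le B$. $Aut_0(T_{d;G})$ is the group of bijections $\alpha$ of $T_{d;G}$ with $\alpha(a)\le\alpha(b)\iff a\le b$ and $\alpha(T_{\mu;G})=T_{\mu;G}$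 for every partition $\mu$ of $d$. *)

(* Defs.v *)
From HB Require Import structures.
From mathcomp Require Import all_boot all_order all_fingroup.
From mathcomp Require Import boolp.
Set Implicit Arguments.
Unset Strict Implicit.
Unset Printing Implicit Defensive.

(* The points are 'I_d = {0,...,d-1}, standing for {1,...,d}. *)

Definition is_partition (d : nat) (lam : seq nat) : bool :=
  [&& sorted geq lam, all (fun x => 0 < x) lam & sumn lam == d].

Definition is_tabloid (d : nat) (lam : seq nat) (A : seq {set 'I_d}) : bool :=
  [&& size A == size lam,
      pairwise (fun X Y : {set 'I_d} => [disjoint X & Y]) A &
      map (fun X : {set 'I_d} => #|X|) A == lam].

(* A finite universe containing all sequences of at most d subsets of 'I_d
   (every tabloid for a partition of d has at most d rows). *)
Definition tabU (d : nat) := {k : 'I_d.+1 & k.-tuple {set 'I_d}}.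

Definition toseq d (x : tabU d) : seq {set 'I_d} := tval (tagged x).

Definition shape d (x : tabU d) : seq nat := map (fun X : {set 'I_d} => #|X|) (toseq x).

Definition Tlam d (lam : seq nat) : {set tabU d} :=
  [set x | is_tabloid lam (toseq x)].

(* T_d: tabloids of some shape lam which is a partition of d
   (the only candidate shape of x is shape x). *)
Definition Td d : {set tabU d} :=
  [set x | is_tabloid (shape x) (toseq x) && is_partition d (shape x)].

Definition tact d (z : {perm 'I_d}) (x : tabU d) : tabU d :=
  Tagged (fun k : 'I_d.+1 => k.-tuple {set 'I_d})
         (map_tuple (fun X : {set 'I_d} => z @: X) (tagged x)).

Definition torbit d (G : {set {perm 'I_d}}) (x : tabU d) : {set tabU d} :=
  [set tact g x | g in G].

Definition TlamG d (G : {set {perm 'I_d}}) (lam : seq nat) : {set {set tabU d}} :=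
  [set torbit G x | x in Tlam d lam].
Definition TdG d (G : {set {perm 'I_d}}) : {set {set tabU d}} :=
  [set torbit G x | x in Td d].

(* A_1 u ... u A_i (missing rows taken empty) *)
Definition prefix_union d (A : seq {set 'I_d}) (i : nat) : {set 'I_d} :=
  \bigcup_(X <- take i A) X.

Definition tab_le d (A B : seq {set 'I_d}) : Prop :=
  forall i, 1 <= i -> prefix_union A i \subset prefix_union B i.

Definition orb_le d (a b : {set tabU d}) : Prop :=
  exists A B, [/\ A \in a, B \in b & tab_le (toseq A) (toseq B)].

Definition orbX d (G : {set {perm 'I_d}}) := {o : {set tabU d} | o \in TdG G}.

Definition orbs_of d (G : {set {perm 'I_d}}) (mu : seq nat) : {set orbX G} :=
  [set a : orbX G | val a \in TlamG G mu].

Definition is_aut0 d (G : {set {perm 'I_d}}) (al : {perm orbX G}) : Prop :=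
  (forall a b : orbX G, orb_le (val (al a)) (val (al b)) <-> orb_le (val a) (val b))
  /\ (forall mu, is_partition d mu -> al @: orbs_of G mu = orbs_of G mu).

Definition Aut0 d (G : {set {perm 'I_d}}) : {set {perm orbX G}} :=
  [set al | `[< is_aut0 al >]].

(* G = {(1), (12)(34), (13)(24), (14)(23)} <= S_4, points 1..4 as 0..3 *)
Definition p4 (k : nat) : 'I_4 := inord k.
Definition G4 : {set {perm 'I_4}} :=
  [set 1%g; (tperm (p4 0) (p4 1) * tperm (p4 2) (p4 3))%g;
            (tperm (p4 0) (p4 2) * tperm (p4 1) (p4 3))%g;
            (tperm (p4 0) (p4 3) * tperm (p4 1) (p4 2))%g].

(* Main.v *)
Require Import Defs.
From HB Require Import structures.
From mathcomp Require Import all_boot all_order all_fingroup.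
From mathcomp Require Import boolp.
From mathcomp Require Import zify.
Set Implicit Arguments. Unset Strict Implicit. Unset Printing Implicit Defensive.

Definition cs (A : {set 'I_4}) : seq bool := [seq (inord i : 'I_4) \in A | i <- iota 0 4].
Lemma size_cs (A : {set 'I_4}) : size (cs A) = 4. Proof. by rewrite size_map size_iota. Qed.
Lemma memc (A : {set 'I_4}) (i : 'I_4) : (i \in A) = nth false (cs A) i.
Proof. by rewrite (nth_map 0) ?size_iota // nth_iota // add0n inord_val. Qed.
Lemma cs_inj : injective cs.
Proof. by move=> A B H; apply/setP => i; rewrite !memc H. Qed.
Definition setof (b : seq bool) : {set 'I_4} := [set i : 'I_4 | nth false b i].
Lemma cs_setof b : size b = 4 -> cs (setof b) = b.
Proof.
move=> Hb; apply: (@eq_from_nth _ false); rewrite ?size_cs ?Hb // => i Hi.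
by rewrite (_ : i = nat_of_ord (Ordinal Hi)) // -memc inE.
Qed.
Lemma card_cs (A : {set 'I_4}) : #|A| = count id (cs A).
Proof.
rewrite count_map cardE size_filter -enumT.
rewrite -val_enum_ord count_map; apply: eq_count => i /=.
by rewrite inord_val.
Qed.
Definition djc (a b : seq bool) := ~~ has (fun n => nth false a n && nth false b n) (iota 0 4).
Lemma disj_cs (A B : {set 'I_4}) : [disjoint A & B] = djc (cs A) (cs B).
Proof.
apply/idP/idP.
  move/disjoint_setI0 => H; apply/hasPn => n; rewrite mem_iota add0n /= => Hn.
  rewrite (_ : n = nat_of_ord (Ordinal Hn)) // -!memc.
  by have := congr1 (fun S : {set 'I_4} => Ordinal Hn \in S) H; rewrite inE in_set0 /= => ->.
move/hasPn=> H; rewrite -setI_eq0; apply/eqP/setP => i; rewrite inE in_set0.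
by have := H i; rewrite mem_iota /= ltn_ord -!memc => /(_ isT) /negbTE.
Qed.

Definition kx (j i : nat) : nat :=
  nth 0 (nth [::] [:: [::0;1;2;3]; [::1;0;3;2]; [::2;3;0;1]; [::3;2;1;0]] j) i.
Definition gK (j : nat) : {perm 'I_4} :=
  match j with
  | 0 => 1%g
  | 1 => (tperm (p4 0) (p4 1) * tperm (p4 2) (p4 3))%g
  | 2 => (tperm (p4 0) (p4 2) * tperm (p4 1) (p4 3))%g
  | _ => (tperm (p4 0) (p4 3) * tperm (p4 1) (p4 2))%g
  end.
Lemma G4E : G4 = [set gK 0; gK 1; gK 2; gK 3].
Proof. by []. Qed.
Lemma p4E0 : p4 0 = @Ordinal 4 0 isT. Proof. by apply: val_inj; rewrite /= inordK. Qed.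
Lemma p4E1 : p4 1 = @Ordinal 4 1 isT. Proof. by apply: val_inj; rewrite /= inordK. Qed.
Lemma p4E2 : p4 2 = @Ordinal 4 2 isT. Proof. by apply: val_inj; rewrite /= inordK. Qed.
Lemma p4E3 : p4 3 = @Ordinal 4 3 isT. Proof. by apply: val_inj; rewrite /= inordK. Qed.
Lemma gKv j (i : 'I_4) : j < 4 -> (gK j i : nat) = kx j i.
Proof.
case: i => [[|[|[|[|i]]]] Hi] //;
case: j => [|[|[|[|j]]]] // _; rewrite /= ?perm1 ?permM /tperm ?permE /= ?p4E0 ?p4E1 ?p4E2 ?p4E3; vm_compute; reflexivity.
Qed.
Lemma kx_lt j i : j < 4 -> i < 4 -> kx j i < 4.
Proof. by case: j => [|[|[|[|]]]] //; case: i => [|[|[|[|]]]]. Qed.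
Lemma kxK j i : j < 4 -> i < 4 -> kx j (kx j i) = i.
Proof. by case: j => [|[|[|[|]]]] //; case: i => [|[|[|[|]]]]. Qed.
Lemma kxM j k i : j < 4 -> k < 4 -> i < 4 -> kx k (kx j i) = kx (kx j k) i.
Proof. by case: j => [|[|[|[|]]]] //; case: k => [|[|[|[|]]]] //; case: i => [|[|[|[|]]]]. Qed.
Lemma gK_mul j k : j < 4 -> k < 4 -> (gK j * gK k)%g = gK (kx j k).
Proof.
move=> Hj Hk; apply/permP => i; apply: ord_inj.
by rewrite permM gKv // gKv // gKv ?kx_lt // kxM.
Qed.
Lemma gKK j i : j < 4 -> gK j (gK j i) = i.
Proof. by move=> Hj; apply: ord_inj; rewrite gKv // gKv // kxK. Qed.
Definition kxc j (r : seq bool) : seq bool := [seq nth false r (kx j i) | i <- iota 0 4].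
Lemma cs_gK j (A : {set 'I_4}) : j < 4 -> cs (gK j @: A) = kxc j (cs A).
Proof.
move=> Hj; apply: (@eq_from_nth _ false); rewrite ?size_cs ?size_map ?size_iota // => n Hn.
rewrite /cs (nth_map 0) ?size_iota // nth_iota // add0n.
rewrite -[inord n](gKK _ Hj) mem_imset; last exact: perm_inj.
by rewrite memc gKv // inordK // /kxc (nth_map 0) ?size_iota // nth_iota.
Qed.

Definition cx (x : tabU 4) : seq (seq bool) := map cs (toseq x).
Lemma toseq_inj : injective (@toseq 4).
Proof.
case=> [k t] [k' t']; rewrite /toseq /= => H.
have Hk : k = k' by apply: val_inj; rewrite /= -(size_tuple t) -(size_tuple t') H.
subst k'; congr existT; exact: val_inj.
Qed.
Lemma size_toseq (x : tabU 4) : size (toseq x) <= 4.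
Proof. by case: x => [k t]; rewrite /toseq /= size_tuple -ltnS ltn_ord. Qed.
Lemma cx_inj : injective cx.
Proof. by move=> x y /(inj_map cs_inj) /toseq_inj. Qed.
Lemma toseq_tact d z (x : tabU d) : toseq (tact z x) = map (fun X : {set 'I_d} => z @: X) (toseq x).
Proof. by case: x. Qed.
Definition actc j (c : seq (seq bool)) := map (kxc j) c.
Lemma cx_tact j (x : tabU 4) : j < 4 -> cx (tact (gK j) x) = actc j (cx x).
Proof. by move=> Hj; rewrite /cx toseq_tact /actc -!map_comp; apply: eq_map => X /=; rewrite cs_gK. Qed.
Definition shapec (c : seq (seq bool)) := map (count id) c.
Definition tabc lam c := [&& size c == size lam, pairwise djc c & shapec c == lam].
Definition Tdc c := tabc (shapec c) c && is_partition 4 (shapec c).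
Lemma shape_cx (x : tabU 4) : Defs.shape x = shapec (cx x).
Proof. by rewrite /Defs.shape /shapec /cx -map_comp; apply: eq_map => X /=; rewrite card_cs. Qed.
Lemma tab_cx lam (x : tabU 4) : is_tabloid lam (toseq x) = tabc lam (cx x).
Proof.
rewrite /is_tabloid /tabc /cx size_map pairwise_map.
rewrite (@eq_in_pairwise _ predT _ (relpre cs djc)); [|by move=> X Y _ _ /=; rewrite disj_cs|by apply/allP].
by rewrite -/(Defs.shape x) shape_cx.
Qed.
Lemma Td_cx (x : tabU 4) : (x \in Td 4) = Tdc (cx x).
Proof. by rewrite inE tab_cx shape_cx. Qed.
Lemma Tlam_cx lam (x : tabU 4) : (x \in Tlam 4 lam) = tabc lam (cx x).
Proof. by rewrite inE tab_cx. Qed.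

Definition mk (s : seq {set 'I_4}) : tabU 4 :=
  existT (fun k : 'I_5 => k.-tuple {set 'I_4}) (inord (size s))
    (insubd (nseq_tuple (inord (size s)) set0) s).
Lemma toseq_mk s : size s <= 4 -> toseq (mk s) = s.
Proof. by move=> Hs; rewrite /toseq /= val_insubd inordK ?eqxx. Qed.

Definition hasp (n : nat) (c : seq (seq bool)) := has (fun r => nth false r n) c.
Definition tlec c d :=
  all (fun i => all (fun n => hasp n (take i c) ==> hasp n (take i d)) (iota 0 4)) (iota 1 4).
Lemma mem_pu (A : seq {set 'I_4}) i p :
  (p \in prefix_union A i) = has (fun X : {set 'I_4} => p \in X) (take i A).
Proof.
rewrite /prefix_union; elim: (take i A) => [|X s IH]; first by rewrite big_nil inE.
by rewrite big_cons inE IH.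
Qed.
Lemma mem_pu_cx (x : tabU 4) i (p : 'I_4) : (p \in prefix_union (toseq x) i) = hasp p (take i (cx x)).
Proof. by rewrite mem_pu /hasp /cx -map_take has_map; apply: eq_has => X /=; rewrite memc. Qed.
Lemma take_min (T : Type) (s : seq T) i : size s <= 4 -> take i s = take (minn i 4) s.
Proof.
move=> Hs; case: (leqP i 4) => h //.
by rewrite !take_oversize // (leq_trans Hs) // ltnW.
Qed.
Lemma size_cx (x : tabU 4) : size (cx x) <= 4.
Proof. by rewrite size_map size_toseq. Qed.
Lemma tab_le_cx (x y : tabU 4) : tab_le (toseq x) (toseq y) <-> tlec (cx x) (cx y).
Proof.
split.
  move=> H; apply/allP => i; rewrite mem_iota => /andP[Hi1 _].
  apply/allP => n; rewrite mem_iota /= => Hn; apply/implyP.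
  rewrite (_ : n = nat_of_ord (Ordinal Hn)) // -!mem_pu_cx.
  exact: (subsetP (H i Hi1)).
move=> /allP H i Hi; apply/subsetP => p; rewrite !mem_pu_cx.
rewrite (take_min i (size_cx x)) (take_min i (size_cx y)).
have Hm : minn i 4 \in iota 1 4.
  by rewrite mem_iota leq_min Hi /= ltnS geq_minr.
have /allP/(_ p) := H _ Hm; rewrite mem_iota /= ltn_ord => /(_ isT) /implyP.
done.
Qed.

Lemma mem_torbit (x y : tabU 4) :
  y \in torbit G4 x <-> exists2 j, j < 4 & y = tact (gK j) x.
Proof.
split.
  case/imsetP => g; rewrite G4E !inE => Hg ->.
  by move: Hg => /orP[/orP[/orP[]|]|] /eqP ->; [exists 0|exists 1|exists 2|exists 3].
case=> j Hj ->; apply/imsetP; exists (gK j) => //; rewrite G4E !inE.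
by case: j Hj => [|[|[|[|]]]] //= _; rewrite eqxx ?orbT.
Qed.
Lemma tact_comp (g h : {perm 'I_4}) (x : tabU 4) : tact h (tact g x) = tact (g * h)%g x.
Proof.
apply: toseq_inj; rewrite !toseq_tact -map_comp; apply: eq_map => X /=.
by rewrite -imset_comp; apply: eq_imset => i; rewrite permM.
Qed.
Lemma tact1 (x : tabU 4) : tact (gK 0) x = x.
Proof.
apply: toseq_inj; rewrite toseq_tact -[RHS]map_id; apply: eq_map => X /=.
by rewrite (eq_imset _ (@perm1 _)) imset_id.
Qed.
Lemma torbit_self (x : tabU 4) : x \in torbit G4 x.
Proof. by apply/mem_torbit; exists 0 => //; rewrite tact1. Qed.
Lemma torbit_tact j (x : tabU 4) : j < 4 -> torbit G4 (tact (gK j) x) = torbit G4 x.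
Proof.
move=> Hj; apply/setP => y; apply/idP/idP => /mem_torbit [k Hk ->]; apply/mem_torbit.
  by exists (kx j k); [exact: kx_lt | rewrite tact_comp gK_mul].
exists (kx j k); first exact: kx_lt.
by rewrite tact_comp gK_mul ?kx_lt // kxK.
Qed.

Lemma memI n k : (n \in iota 0 k) = (n < k). Proof. by rewrite mem_iota. Qed.
Fixpoint ext {A : Type} (U : seq A) k : seq (seq A) :=
  if k is k'.+1 then let e := ext U k' in flatten (map (fun x => map (cons x) e) U)
  else [:: [::]].
Definition rows16 := ext [:: false; true] 4.
Definition allc := flatten [seq ext rows16 k | k <- iota 0 5].
Lemma ext_mem (A : eqType) (U : seq A) (s : seq A) : all (mem U) s -> s \in ext U (size s).
Proof.
elim: s => [|x s IH] /=; first by rewrite inE.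
case/andP => Hx Hs; apply/flatten_mapP; exists x => //; exact: map_f (IH Hs).
Qed.
Lemma cx_allc (x : tabU 4) : cx x \in allc.
Proof.
apply/flatten_mapP; exists (size (cx x)); first by rewrite mem_iota ltnS size_cx.
apply: ext_mem; apply/allP => r /mapP [X _ ->].
by rewrite /rows16 -(size_cs X); apply: ext_mem; apply/allP; case.
Qed.

Definition T := true. Definition F := false.
Definition repc (n : nat) : seq (seq bool) := nth [::] [::
  [:: [:: T;T;T;T]];
  [:: [:: T;T;T;F]; [:: F;F;F;T]];
  [:: [:: T;T;F;F]; [:: F;F;T;T]];
  [:: [:: T;F;T;F]; [:: F;T;F;T]];
  [:: [:: T;F;F;T]; [:: F;T;T;F]];
  [:: [:: T;T;F;F]; [:: F;F;T;F]; [:: F;F;F;T]];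
  [:: [:: T;F;T;F]; [:: F;T;F;F]; [:: F;F;F;T]];
  [:: [:: T;F;F;T]; [:: F;T;F;F]; [:: F;F;T;F]];
  [:: [:: T;F;F;F]; [:: F;T;F;F]; [:: F;F;T;F]; [:: F;F;F;T]];
  [:: [:: T;F;F;F]; [:: F;T;F;F]; [:: F;F;F;T]; [:: F;F;T;F]];
  [:: [:: T;F;F;F]; [:: F;F;T;F]; [:: F;T;F;F]; [:: F;F;F;T]];
  [:: [:: T;F;F;F]; [:: F;F;T;F]; [:: F;F;F;T]; [:: F;T;F;F]];
  [:: [:: T;F;F;F]; [:: F;F;F;T]; [:: F;T;F;F]; [:: F;F;T;F]];
  [:: [:: T;F;F;F]; [:: F;F;F;T]; [:: F;F;T;F]; [:: F;T;F;F]]] n.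
Definition rkn (n : nat) : nat :=
  if n == 0 then 0 else if n == 1 then 1 else if n < 5 then 2 else if n < 8 then 3 else 4.
Definition LEn (n m : nat) : bool :=
  (n == m) || (rkn m < rkn n) && ~~ [&& rkn n == 3, rkn m == 2 & n - 5 != m - 2].
Definition LEc (n m : nat) : bool :=
  has (fun j => has (fun k => tlec (actc j (repc n)) (actc k (repc m))) (iota 0 4)) (iota 0 4).
Definition shpl : seq (seq nat) := [:: [:: 4]; [:: 3; 1]; [:: 2; 2]; [:: 2; 1; 1]; [:: 1; 1; 1; 1]].

Lemma C_univ : all (fun c => if Tdc c then has (fun n => has (fun j => c == actc j (repc n)) (iota 0 4)) (iota 0 14) else true) allc.
Proof. vm_compute; reflexivity. Qed.
Lemma C_rep : all (fun n => [&& size (repc n) <= 4, all (fun r => size r == 4) (repc n), Tdc (repc n) & shapec (repc n) == nth [::] shpl (rkn n)]) (iota 0 14).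
Proof. vm_compute; reflexivity. Qed.
Lemma C_inj : all (fun n => all (fun m => if has (fun j => repc m == actc j (repc n)) (iota 0 4) then n == m else true) (iota 0 14)) (iota 0 14).
Proof. vm_compute; reflexivity. Qed.
Lemma C_le : all (fun n => all (fun m => LEc n m == LEn n m) (iota 0 14)) (iota 0 14).
Proof. vm_compute; reflexivity. Qed.

Definition rep (n : nat) : tabU 4 := mk (map setof (repc n)).
Lemma C_rep_n n : n < 14 -> [&& size (repc n) <= 4, all (fun r => size r == 4) (repc n), Tdc (repc n) & shapec (repc n) == nth [::] shpl (rkn n)].
Proof. by move=> Hn; have /allP := C_rep; apply; rewrite mem_iota. Qed.
Lemma cx_rep n : n < 14 -> cx (rep n) = repc n.
Proof.
move=> /C_rep_n /and4P [Hs Hr _ _].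
rewrite /cx /rep toseq_mk ?size_map // -map_comp.
rewrite -[RHS]map_id; apply/eq_in_map => r Hr' /=.
by rewrite cs_setof //; apply/eqP; exact: (allP Hr).
Qed.
Lemma Td_rep n : n < 14 -> rep n \in Td 4.
Proof. by move=> Hn; rewrite Td_cx cx_rep //; case/and4P: (C_rep_n Hn). Qed.
Lemma shape_rep n : n < 14 -> Defs.shape (rep n) = nth [::] shpl (rkn n).
Proof. by move=> Hn; rewrite shape_cx cx_rep //; case/and4P: (C_rep_n Hn) => _ _ _ /eqP. Qed.
Lemma shape_tact (g : {perm 'I_4}) (x : tabU 4) : Defs.shape (tact g x) = Defs.shape x.
Proof.
rewrite /Defs.shape toseq_tact -map_comp; apply: eq_map => X /=.
by rewrite card_imset //; exact: perm_inj.
Qed.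
Lemma Tlam_shape lam (x : tabU 4) : x \in Tlam 4 lam -> Defs.shape x = lam.
Proof. by rewrite inE => /and3P [_ _ /eqP]. Qed.

Lemma Td_orbit (x : tabU 4) : x \in Td 4 -> exists2 n, n < 14 & torbit G4 x = torbit G4 (rep n).
Proof.
rewrite Td_cx => Hx.
have /hasP [n] : has (fun n => has (fun j => cx x == actc j (repc n)) (iota 0 4)) (iota 0 14).
  by have := allP C_univ _ (cx_allc x); rewrite Hx.
rewrite memI => Hn.
case/hasP => j; rewrite memI => Hj /eqP E.
exists n => //.
have -> : x = tact (gK j) (rep n) by apply: cx_inj; rewrite cx_tact // cx_rep.
exact: torbit_tact.
Qed.
Lemma rep_inj n m : n < 14 -> m < 14 -> rep m \in torbit G4 (rep n) -> n = m.
Proof.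
move=> Hn Hm /mem_torbit [j Hj E].
have H : has (fun j => repc m == actc j (repc n)) (iota 0 4).
  by apply/hasP; exists j; rewrite ?memI // -cx_rep // E cx_tact // cx_rep.
have := allP C_inj _ (_ : n \in iota 0 14); rewrite memI => /(_ Hn) /allP.
move/(_ m); rewrite memI => /(_ Hm).
by rewrite H => /eqP.
Qed.
Lemma orbit_inj n m : n < 14 -> m < 14 -> torbit G4 (rep n) = torbit G4 (rep m) -> n = m.
Proof. by move=> Hn Hm E; apply: rep_inj => //; rewrite E torbit_self. Qed.
Lemma orb_le_rep n m : n < 14 -> m < 14 ->
  orb_le (torbit G4 (rep n)) (torbit G4 (rep m)) <-> LEn n m.
Proof.
move=> Hn Hm.
have EL : LEc n m = LEn n m.
  have := allP C_le _ (_ : n \in iota 0 14); rewrite memI => /(_ Hn) /allP.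
  by move/(_ m); rewrite memI => /(_ Hm) /eqP.
rewrite -EL; split.
  case=> A [B [/mem_torbit [j Hj ->] /mem_torbit [k Hk ->] /tab_le_cx]].
  rewrite !cx_tact // !cx_rep // => H.
  by apply/hasP; exists j; rewrite ?memI //; apply/hasP; exists k; rewrite ?memI.
case/hasP => j; rewrite memI => Hj /hasP [k]; rewrite memI => Hk H.
exists (tact (gK j) (rep n)), (tact (gK k) (rep m)); split.
- by apply/mem_torbit; exists j.
- by apply/mem_torbit; exists k.
- by apply/tab_le_cx; rewrite !cx_tact // !cx_rep.
Qed.
Lemma Tlam_rep n lam : n < 14 ->
  (torbit G4 (rep n) \in TlamG G4 lam) = (nth [::] shpl (rkn n) == lam).
Proof.
move=> Hn; apply/idP/idP.
  case/imsetP => x Hx E.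
  have : rep n \in torbit G4 x by rewrite -E torbit_self.
  case/mem_torbit => j Hj E'.
  by rewrite -shape_rep // E' shape_tact (Tlam_shape Hx).
move/eqP => <-; apply/imsetP; exists (rep n) => //.
rewrite Tlam_cx cx_rep //; case/and4P: (C_rep_n Hn) => _ _ /andP[H _] /eqP <-.
exact: H.
Qed.
Lemma TdG_rep n : n < 14 -> torbit G4 (rep n) \in TdG G4.
Proof. by move=> Hn; apply: imset_f; exact: Td_rep. Qed.
Lemma TdG_inv o : o \in TdG G4 -> exists2 n, n < 14 & o = torbit G4 (rep n).
Proof. by case/imsetP => x /Td_orbit [n Hn E] ->; exists n. Qed.

Definition idx := (unit + unit + 'I_3 + 'I_3 + 'I_6)%type.
Definition i4 : idx := inl (inl (inl (inl tt))).
Definition i31 : idx := inl (inl (inl (inr tt))).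
Definition i22 (k : 'I_3) : idx := inl (inl (inr k)).
Definition i211 (k : 'I_3) : idx := inl (inr k).
Definition i1 (k : 'I_6) : idx := inr k.
Definition enc (e : idx) : nat :=
  match e with
  | inl (inl (inl (inl _))) => 0
  | inl (inl (inl (inr _))) => 1
  | inl (inl (inr k)) => 2 + k
  | inl (inr k) => 5 + k
  | inr k => 8 + k
  end.
Definition rk (e : idx) : nat :=
  match e with
  | inl (inl (inl (inl _))) => 0
  | inl (inl (inl (inr _))) => 1
  | inl (inl (inr k)) => 2
  | inl (inr k) => 3
  | inr k => 4
  end.
Definition mism (e e' : idx) : bool :=
  match e, e' with
  | inl (inr k), inl (inl (inr k')) => k != k'
  | _, _ => false
  end.
Definition LEi (e e' : idx) : bool := (e == e') || (rk e' < rk e) && ~~ mism e e'.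

Lemma enc_lt e : enc e < 14.
Proof. case: e => [[[[[]|[]]|k]|k]|k] //=; have := ltn_ord k; lia. Qed.
Lemma enc_inj : injective enc.
Proof.
move=> e e'; case: e => [[[[[]|[]]|k]|k]|k]; case: e' => [[[[[]|[]]|k']|k']|k'] //= H;
  try (have := ltn_ord k); try (have := ltn_ord k'); try lia;
  by move/addnI/ord_inj: H => ->.
Qed.
Ltac idxcase e := case: e => [[[[[]|[]]|[[|[|[|?]]] ?]]|[[|[|[|?]]] ?]]|[[|[|[|[|[|[|?]]]]]] ?]].
Lemma rkn_enc e : rkn (enc e) = rk e.
Proof. by idxcase e. Qed.
Lemma LEn_enc e e' : LEn (enc e) (enc e') = LEi e e'.
Proof. by idxcase e; idxcase e'. Qed.
Lemma enc_surj n : n < 14 -> exists e, enc e = n.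
Proof.
case: n => [|[|[|[|[|[|[|[|[|[|[|[|[|[|]]]]]]]]]]]]]] // _.
- by exists i4.
- by exists i31.
- by exists (i22 (@Ordinal 3 0 isT)).
- by exists (i22 (@Ordinal 3 1 isT)).
- by exists (i22 (@Ordinal 3 2 isT)).
- by exists (i211 (@Ordinal 3 0 isT)).
- by exists (i211 (@Ordinal 3 1 isT)).
- by exists (i211 (@Ordinal 3 2 isT)).
- by exists (i1 (@Ordinal 6 0 isT)).
- by exists (i1 (@Ordinal 6 1 isT)).
- by exists (i1 (@Ordinal 6 2 isT)).
- by exists (i1 (@Ordinal 6 3 isT)).
- by exists (i1 (@Ordinal 6 4 isT)).
- by exists (i1 (@Ordinal 6 5 isT)).
Qed.

Definition O (e : idx) : {set tabU 4} := torbit G4 (rep (enc e)).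
Definition shpi (e : idx) : seq nat := nth [::] shpl (rk e).
Lemma O_inj : injective O.
Proof. by move=> e e' /orbit_inj; rewrite !enc_lt => /(_ isT isT) /enc_inj. Qed.
Lemma O_TdG e : O e \in TdG G4.
Proof. exact: TdG_rep (enc_lt e). Qed.
Lemma O_surj o : o \in TdG G4 -> exists e, o = O e.
Proof. by case/TdG_inv => n /enc_surj [e <-] ->; exists e. Qed.
Lemma O_le e e' : orb_le (O e) (O e') <-> LEi e e'.
Proof. by rewrite -LEn_enc; apply: orb_le_rep; exact: enc_lt. Qed.
Lemma O_Tlam e lam : (O e \in TlamG G4 lam) = (shpi e == lam).
Proof. by rewrite /O Tlam_rep ?enc_lt // rkn_enc. Qed.
Lemma shpi_rk e e' : (shpi e == shpi e') = (rk e == rk e').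
Proof. by case: e => [[[[[]|[]]|k]|k]|k]; case: e' => [[[[[]|[]]|k']|k']|k']. Qed.
Lemma shpi_part e : is_partition 4 (shpi e).
Proof. by case: e => [[[[[]|[]]|k]|k]|k]. Qed.

Definition phi (e : idx) : orbX G4 := exist _ (O e) (O_TdG e).
Lemma phi_inj : injective phi.
Proof. by move=> e e' /(congr1 val) /O_inj. Qed.
Definition psi (a : orbX G4) : idx := odflt i4 [pick e | phi e == a].
Lemma psiK a : phi (psi a) = a.
Proof.
rewrite /psi; case: pickP => [e /eqP //|H].
case: a H => o Ho H; case: (O_surj Ho) => e E.
by have := H e; rewrite /phi; move/eqP; case; apply: val_inj; rewrite /= E.
Qed.
Lemma phiK e : psi (phi e) = e.
Proof. by apply: phi_inj; rewrite psiK. Qed.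
Lemma psi_inj : injective psi.
Proof. exact: can_inj psiK. Qed.
Lemma le_psi (a b : orbX G4) : orb_le (val a) (val b) <-> LEi (psi a) (psi b).
Proof. by rewrite -{1}(psiK a) -{1}(psiK b) /=; exact: O_le. Qed.
Lemma orbs_psi mu a : (a \in orbs_of G4 mu) = (shpi (psi a) == mu).
Proof. by rewrite inE -{1}(psiK a) /= O_Tlam. Qed.
Lemma orbs_phi mu e : (phi e \in orbs_of G4 mu) = (shpi e == mu).
Proof. by rewrite orbs_psi phiK. Qed.

Definition sg (al : {perm orbX G4}) (e : idx) := psi (al (phi e)).
Lemma sgE (al : {perm orbX G4}) e : al (phi e) = phi (sg al e).
Proof. by rewrite /sg psiK. Qed.

Lemma aut0P al : al \in Aut0 G4 <->
  (forall e, rk (sg al e) = rk e) /\ (forall e e', LEi (sg al e) (sg al e') = LEi e e').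
Proof.
rewrite inE; split.
  move/asboolP => [H1 H2]; split.
    move=> e; have := H2 _ (shpi_part e).
    have He : phi e \in orbs_of G4 (shpi e) by rewrite orbs_phi.
    move=> HS; have : al (phi e) \in orbs_of G4 (shpi e) by rewrite -HS; apply: imset_f.
    by rewrite orbs_psi -/(sg al e) shpi_rk => /eqP.
  move=> e e'; apply/idP/idP => H.
    have := (le_psi (al (phi e)) (al (phi e'))).2 H => /(H1 _ _).1 /le_psi.
    by rewrite !phiK.
  have : LEi (psi (phi e)) (psi (phi e')) by rewrite !phiK.
  by move/le_psi/(H1 _ _).2/le_psi.
move=> [Hrk Hle]; apply/asboolP; split.
  move=> a b; rewrite -(psiK a) -(psiK b) !sgE; split.
    by move/O_le; rewrite Hle => /O_le.
  by move/O_le; rewrite -Hle => /O_le.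
move=> mu _; apply/eqP; rewrite eqEcard card_imset ?leqnn ?andbT; last exact: perm_inj.
apply/subsetP => b /imsetP [a Ha ->]; move: Ha.
by rewrite -(psiK a) sgE !orbs_phi /shpi Hrk.
Qed.

Definition bld (s : 'I_3 -> 'I_3) (t : 'I_6 -> 'I_6) (e : idx) : idx :=
  match e with
  | inl (inl (inr k)) => i22 (s k)
  | inl (inr k) => i211 (s k)
  | inr k => i1 (t k)
  | e => e
  end.
Lemma bld_inj s t : injective s -> injective t -> injective (bld s t).
Proof.
move=> Hs Ht e e'; case: e => [[[[[]|[]]|k]|k]|k]; case: e' => [[[[[]|[]]|k']|k']|k'] //=;
  first [by case=> /Hs -> | by case=> /Ht ->].
Qed.
Lemma rk_bld s t e : rk (bld s t e) = rk e.
Proof. by case: e => [[[[[]|[]]|k]|k]|k]. Qed.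
Lemma LE_bld s t e e' : injective s -> injective t -> LEi (bld s t e) (bld s t e') = LEi e e'.
Proof.
move=> Hs Ht; rewrite /LEi (inj_eq (bld_inj Hs Ht)) !rk_bld; congr (_ || _ && ~~ _).
by case: e => [[[[[]|[]]|k]|k]|k]; case: e' => [[[[[]|[]]|k']|k']|k'] //=; rewrite (inj_eq Hs).
Qed.
Definition alf (h : idx -> idx) (a : orbX G4) : orbX G4 := phi (h (psi a)).
Lemma alf_inj h : injective h -> injective (alf h).
Proof. by move=> Hh a b /phi_inj /Hh /psi_inj. Qed.
Definition Bld h (Hh : injective h) : {perm orbX G4} := perm (alf_inj Hh).
Lemma sg_Bld h (Hh : injective h) e : sg (Bld Hh) e = h e.
Proof. by rewrite /sg /Bld permE /alf !phiK. Qed.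
Lemma Bld_aut0 s t (Hs : injective s) (Ht : injective t) :
  Bld (bld_inj Hs Ht) \in Aut0 G4.
Proof.
apply/aut0P; split => [e|e e']; rewrite !sg_Bld ?rk_bld //; exact: LE_bld.
Qed.

Lemma rk0 e : rk e = 0 -> e = i4.
Proof. by case: e => [[[[[]|[]]|k]|k]|k]. Qed.
Lemma rk1 e : rk e = 1 -> e = i31.
Proof. by case: e => [[[[[]|[]]|k]|k]|k]. Qed.
Lemma rk2 e : rk e = 2 -> exists k, e = i22 k.
Proof. by case: e => [[[[[]|[]]|k]|k]|k] // _; exists k. Qed.
Lemma rk3 e : rk e = 3 -> exists k, e = i211 k.
Proof. by case: e => [[[[[]|[]]|k]|k]|k] // _; exists k. Qed.
Lemma rk4 e : rk e = 4 -> exists k, e = i1 k.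
Proof. by case: e => [[[[[]|[]]|k]|k]|k] // _; exists k. Qed.
Lemma LE_211_22 k k' : LEi (i211 k') (i22 k) = (k' == k).
Proof. by rewrite /LEi /= negbK. Qed.

Lemma match211 al : al \in Aut0 G4 -> forall k,
  exists k', sg al (i22 k) = i22 k' /\ sg al (i211 k) = i211 k'.
Proof.
case/aut0P => Hrk Hle k.
have [k2 E2] := rk2 (Hrk (i22 k)); have [k3 E3] := rk3 (Hrk (i211 k)).
exists k2; split => //; rewrite E3.
have := Hle (i211 k) (i22 k); rewrite LE_211_22 eqxx E2 E3 LE_211_22.
by move/eqP ->.
Qed.

Lemma aut0_uniq al al' : al \in Aut0 G4 -> al' \in Aut0 G4 ->
  (forall k, sg al (i22 k) = sg al' (i22 k)) -> (forall k, sg al (i1 k) = sg al' (i1 k)) ->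
  al = al'.
Proof.
move=> Ha Ha' H22 H1.
have E : forall e, sg al e = sg al' e.
  have [R _] := (aut0P al).1 Ha; have [R' _] := (aut0P al').1 Ha'.
  case=> [[[[[]|[]]|k]|k]|k].
  - by rewrite (rk0 (R i4)) (rk0 (R' i4)).
  - by rewrite (rk1 (R i31)) (rk1 (R' i31)).
  - exact: H22.
  - have [k1 [E1 F1]] := match211 Ha k; have [k2 [E2 F2]] := match211 Ha' k.
    rewrite -[inl (inr k)]/(i211 k) F1 F2.
    by have := H22 k; rewrite E1 E2; case=> ->.
  - exact: H1.
apply/permP => a; rewrite -(psiK a) !sgE; congr phi; exact: E.
Qed.

Lemma TlamG_img mu : is_partition 4 mu -> TlamG G4 mu = O @: [set e | shpi e == mu].
Proof.
move=> Hmu; apply/setP => o; apply/idP/idP.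
  move=> Ho; case/imsetP: (Ho) => x Hx Eo.
  have HxTd : x \in Td 4.
    by rewrite inE (Tlam_shape Hx) Hmu andbT; move: Hx; rewrite inE.
  have [e E] := O_surj (imset_f (torbit G4) HxTd).
  rewrite Eo E; apply: imset_f; rewrite inE -O_Tlam -E -Eo; exact: Ho.
by case/imsetP => e; rewrite inE => He ->; rewrite O_Tlam.
Qed.
Lemma cardS n (f : 'I_n -> idx) mu : is_partition 4 mu -> injective f ->
  (forall e, shpi e == mu -> exists k, e = f k) -> (forall k, shpi (f k) == mu) ->
  #|TlamG G4 mu| = n.
Proof.
move=> Hmu Hf H1 H2.
rewrite TlamG_img // card_imset; last exact: O_inj.
have -> : [set e | shpi e == mu] = f @: setT.
  apply/setP => e; rewrite inE; apply/idP/imsetP => [/H1 [k ->]|[k _ ->]]; last exact: H2.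
  by exists k.
by rewrite card_imset // cardsT card_ord.
Qed.

Lemma shp22 e : shpi e == [:: 2; 2] -> exists k, e = i22 k.
Proof. by case: e => [[[[[]|[]]|k]|k]|k] // _; exists k. Qed.
Lemma shp211 e : shpi e == [:: 2; 1; 1] -> exists k, e = i211 k.
Proof. by case: e => [[[[[]|[]]|k]|k]|k] // _; exists k. Qed.
Lemma shp1 e : shpi e == [:: 1; 1; 1; 1] -> exists k, e = i1 k.
Proof. by case: e => [[[[[]|[]]|k]|k]|k] // _; exists k. Qed.

Definition Phi (st : {perm 'I_3} * {perm 'I_6}) : {perm orbX G4} :=
  Bld (bld_inj (@perm_inj _ st.1) (@perm_inj _ st.2)).
Lemma Phi_morph : {in [set: {perm 'I_3} * {perm 'I_6}] &, {morph Phi : x y / (x * y)%g}}.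
Proof.
move=> [s1 t1] [s2 t2] _ _; apply/permP => a.
rewrite permM -(psiK a) !sgE !sg_Bld; congr phi.
by case: (psi a) => [[[[[]|[]]|k]|k]|k] //=; rewrite !permM.
Qed.
Definition PhiM : {morphism [set: {perm 'I_3} * {perm 'I_6}] >-> {perm orbX G4}} :=
  @Morphism _ _ [set: {perm 'I_3} * {perm 'I_6}] Phi Phi_morph.
Lemma Phi_injm : ('injm PhiM)%g.
Proof.
apply/injmP => [[s1 t1] [s2 t2] _ _ E].
have E' : forall e, bld s1 t1 e = bld s2 t2 e.
  by move=> e; have := congr1 (fun al => sg al e) E; rewrite /= !sg_Bld.
by congr pair; apply/permP => k; [have := E' (i22 k) | have := E' (i1 k)]; case.
Qed.
Lemma Phi_im : (PhiM @* [set: {perm 'I_3} * {perm 'I_6}])%g = Aut0 G4.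
Proof.
rewrite morphimEdom; apply/setP => al; apply/imsetP/idP.
  by case=> [[s t] _ ->]; exact: Bld_aut0.
move=> Hal; have [Hrk _] := (aut0P al).1 Hal.
pose s k := match sg al (i22 k) with inl (inl (inr k')) => k' | _ => k end.
pose t k := match sg al (i1 k) with inr k' => k' | _ => k end.
have Hs : forall k, sg al (i22 k) = i22 (s k).
  by move=> k; rewrite /s; have [k' ->] := rk2 (Hrk (i22 k)).
have Ht : forall k, sg al (i1 k) = i1 (t k).
  by move=> k; rewrite /t; have [k' ->] := rk4 (Hrk (i1 k)).
have sI : injective s.
  move=> k1 k2 E; have : sg al (i22 k1) = sg al (i22 k2) by rewrite !Hs E.
  by move/psi_inj/perm_inj/phi_inj; case.
have tI : injective t.
  move=> k1 k2 E; have : sg al (i1 k1) = sg al (i1 k2) by rewrite !Ht E.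
  by move/psi_inj/perm_inj/phi_inj; case.
exists (perm sI, perm tI); first by rewrite inE.
apply: aut0_uniq Hal (Bld_aut0 _ _) _ _ => k; by rewrite sg_Bld /= permE ?Hs ?Ht.
Qed.

Theorem theorem10p1p1 :
  [/\ #|TlamG G4 [:: 4]| = 1, #|TlamG G4 [:: 3; 1]| = 1,
      #|TlamG G4 [:: 2; 2]| = 3, #|TlamG G4 [:: 2; 1; 1]| = 3
    & #|TlamG G4 [:: 1; 1; 1; 1]| = 6]
  /\ (* each (2^2)-orbit lies above exactly one (2,1^2)-orbit, and conversely *)
  (forall a, a \in TlamG G4 [:: 2; 2] ->
     exists! b, b \in TlamG G4 [:: 2; 1; 1] /\ orb_le b a)
  /\ (forall b, b \in TlamG G4 [:: 2; 1; 1] ->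
     exists! a, a \in TlamG G4 [:: 2; 2] /\ orb_le b a)
  /\ (* automorphisms permute the (2^2)-orbits and correspondingly the (2,1^2)-orbits *)
  (forall al, al \in Aut0 G4 ->
     forall a b : orbX G4, a \in orbs_of G4 [:: 2; 2] -> b \in orbs_of G4 [:: 2; 1; 1] ->
       orb_le (val b) (val a) -> orb_le (val (al b)) (val (al a)))
  /\ (* Aut_0 = (simultaneous perms of T_(2^2), T_(2,1^2)) x (all perms of T_(1^4)) *)
  (forall f : orbX G4 -> orbX G4,
     {in orbs_of G4 [:: 2; 2], forall a, f a \in orbs_of G4 [:: 2; 2]} ->
     {in orbs_of G4 [:: 2; 2] &, injective f} ->
     {in orbs_of G4 [:: 1; 1; 1; 1], forall a, f a \in orbs_of G4 [:: 1; 1; 1; 1]} ->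
     {in orbs_of G4 [:: 1; 1; 1; 1] &, injective f} ->
     exists! al, al \in Aut0 G4 /\
       {in orbs_of G4 [:: 2; 2] :|: orbs_of G4 [:: 1; 1; 1; 1], forall a, al a = f a})
  /\ (Aut0 G4 \isog [set: {perm 'I_3} * {perm 'I_6}])%g.
Proof.
split.
  split.
  - apply: (@cardS 1 (fun _ => i4)) => //; first by move=> x y _; rewrite (ord1 x) (ord1 y).
    by case=> [[[[[]|[]]|k]|k]|k] //= _; exists ord0.
  - apply: (@cardS 1 (fun _ => i31)) => //; first by move=> x y _; rewrite (ord1 x) (ord1 y).
    by case=> [[[[[]|[]]|k]|k]|k] //= _; exists ord0.
  - apply: (@cardS 3 i22) => //; first by move=> ? ? [].
    exact: shp22.
  - apply: (@cardS 3 i211) => //; first by move=> ? ? [].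
    exact: shp211.
  - apply: (@cardS 6 i1) => //; first by move=> ? ? [].
    exact: shp1.
split.
  move=> a; rewrite TlamG_img // => /imsetP [e]; rewrite inE => /shp22 [k ->] ->.
  exists (O (i211 k)); split.
    by split; [rewrite O_Tlam | apply/O_le; rewrite LE_211_22].
  move=> b [Hb Hle]; move: Hb; rewrite TlamG_img // => /imsetP [e'].
  rewrite inE => /shp211 [k' ->] Eb; move: Hle; rewrite Eb => /O_le.
  by rewrite LE_211_22 => /eqP ->.
split.
  move=> b; rewrite TlamG_img // => /imsetP [e]; rewrite inE => /shp211 [k ->] ->.
  exists (O (i22 k)); split.
    by split; [rewrite O_Tlam | apply/O_le; rewrite LE_211_22].
  move=> a [Ha Hle]; move: Ha; rewrite TlamG_img // => /imsetP [e'].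
  rewrite inE => /shp22 [k' ->] Ea; move: Hle; rewrite Ea => /O_le.
  by rewrite LE_211_22 => /eqP ->.
split.
  move=> al Hal a b _ _ Hle; move: Hal; rewrite inE => /asboolP [H _].
  exact: (H b a).2 Hle.
split; last first.
  rewrite -Phi_im isog_sym; exact: sub_isog (subsetT _) Phi_injm.
move=> f Hf22 Hi22 Hf1 Hi1.
pose s k := match psi (f (phi (i22 k))) with inl (inl (inr k')) => k' | _ => k end.
pose t k := match psi (f (phi (i1 k))) with inr k' => k' | _ => k end.
have Hs : forall k, psi (f (phi (i22 k))) = i22 (s k).
  move=> k; have := Hf22 (phi (i22 k)); rewrite orbs_phi orbs_psi => /(_ isT).
  by rewrite /s => /shp22 [k' ->].
have Ht : forall k, psi (f (phi (i1 k))) = i1 (t k).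
  move=> k; have := Hf1 (phi (i1 k)); rewrite orbs_phi orbs_psi => /(_ isT).
  by rewrite /t => /shp1 [k' ->].
have sI : injective s.
  move=> k1 k2 E.
  have E' : f (phi (i22 k1)) = f (phi (i22 k2)).
    by rewrite -[f (phi (i22 k1))]psiK -[f (phi (i22 k2))]psiK !Hs E.
  have := Hi22 (phi (i22 k1)) (phi (i22 k2)); rewrite !orbs_phi => /(_ isT isT E').
  by move/phi_inj; case.
have tI : injective t.
  move=> k1 k2 E.
  have E' : f (phi (i1 k1)) = f (phi (i1 k2)).
    by rewrite -[f (phi (i1 k1))]psiK -[f (phi (i1 k2))]psiK !Ht E.
  have := Hi1 (phi (i1 k1)) (phi (i1 k2)); rewrite !orbs_phi => /(_ isT isT E').
  by move/phi_inj; case.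
exists (Bld (bld_inj sI tI)); split.
  split; first exact: Bld_aut0.
  move=> a; rewrite -(psiK a) inE !orbs_phi => /orP [/shp22 [k ->]|/shp1 [k ->]].
    by rewrite sgE sg_Bld /= -Hs psiK.
  by rewrite sgE sg_Bld /= -Ht psiK.
move=> al' [Ha' Hag].
apply: aut0_uniq (Bld_aut0 _ _) Ha' _ _ => k; rewrite sg_Bld /=.
  by rewrite -Hs /sg Hag // inE !orbs_phi.
by rewrite -Ht /sg Hag // inE !orbs_phi.
Qed.
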